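(* Let $\mathcal G$ be an undirected graph on nodes $\{1,\dots,n\}$ with adjacency matrix $A=(a_{ij})$, and consider the networked SIR process on $\mathcal G$ with a given set of initially infected nodes. Let a budget $\bar C>0$, a level $\bar\lambda>0$, intervals $[\underline\beta_i,\bar\beta_i]\subset(0,\infty)$, $[\underline\delta_i,\bar\delta_i]\subset(0,\infty)$, and cost functions $f_i,g_i$ ($i=1,\dots,n$) be given, where each $f_i$ and each $g_i$ is a posynomial. Let $J,B,D$ be the $n\times n$ diagonal matrices with $J_{ii}=S_i(0)$, $B_{ii}=\beta_i$, $D_{ii}=\delta_i$. Suppose $\beta_1,\dots,\beta_n,\delta_1,\dots,\delta_n$ and an entrywise positive $v\in\mathbb R^n$ satisfy the (posynomial) constraints $$\sum_{i=1}^n\big(f_i(\delta_i)+g_i(\beta_i)\big)\le\bar C,\quad v^\top JBA+\mathbf 1_n^\top D<v^\top D,\quad v^\top I(0)<\bar\lambda+\sigma_I(0),$$ $$\underline\beta_i\le\beta_i\le\bar\beta_i,\quad \underline\delta_i\le\delta_i\le\bar\delta_i\quad(i=1,\dots,n).$$ Then these $\beta_i,\delta_i$ solve the resource allocation problem, i.e., $\beta_i\in[\underline\beta_i,\bar\beta_i]$, $\delta_i\in[\underline\delta_i,\bar\delta_i]$ for all $i$, $\sum_{i=1}^n(f_i(\delta_i)+g_i(\beta_i))\le\bar C$, and the SIR process with infection rates $\beta_i$ and recovery rates $\delta_i$ satisfies $\lambda\le\bar\lambda$.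
   Context: Networked SIR process with infection rates $\beta_i>0$ and recovery rates $\delta_i>0$: each node $i$ is at each time $t\ge0$ in exactly one of the states susceptible, infected, removed, encoded by $\{0,1\}$-valued $S_i(t),I_i(t),R_i(t)$. It is a continuous-time Markov process with $\Pr(I_i(t+h)=1\mid S_i(t)=1)=\beta_i\sum_{j}a_{ij}I_j(t)h+o(h)$ and $\Pr(R_i(t+h)=1\mid I_i(t)=1)=\delta_i h+o(h)$; removed nodes stay removed. At time $0$ each node is either susceptible or infected (known). $I(t)=[I_1(t),\dots,I_n(t)]^\top$; $\sigma_I(t),\sigma_R(t)$ are the numbers of infected and removed nodes at time $t$; $\lambda=\lim_{t\to\infty}E[\sigma_R(t)]-\sigma_I(0)$. A monomial in positive variables $x_1,\dots,x_m$ is $c x_1^{a_1}\cdots x_m^{a_m}$ with $c>0$, $a_k\in\mathbb R$; a posynomial is a finite sum of monomials. $\mathbf 1_n$ is the all-ones vector; vector inequalities are entrywise. *)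

(* Defs.v *)
From HB Require Import structures.
From mathcomp Require Import all_boot all_order all_algebra.
From mathcomp Require Import all_classical all_reals all_analysis.
Set Implicit Arguments. Unset Strict Implicit. Unset Printing Implicit Defensive.
Import Order.TTheory GRing.Theory Num.Theory.
Import numFieldNormedType.Exports.
Local Open Scope ring_scope.

(* Node states encoded in 'I_3 : 0 = susceptible, 1 = infected, 2 = removed. *)
Definition config (n : nat) := {ffun 'I_n -> 'I_3}.

Definition stS : 'I_3 := @Ordinal 3 0 isT.
Definition stI : 'I_3 := @Ordinal 3 1 isT.
Definition stR : 'I_3 := @Ordinal 3 2 isT.

Definition upd (n : nat) (x : config n) (i : 'I_n) (s : 'I_3) : config n :=
  [ffun j => if j == i then s else x j].

Definition sir_rate (R : realType) (n : nat) (A : 'M[R]_n)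
  (beta delta : 'I_n -> R) (x y : config n) : R :=
  \sum_(i < n)
    ((if (x i == stS) && (y == upd x i stI)
      then beta i * \sum_(j < n) A i j * (x j == stI)%:R else 0)
   + (if (x i == stI) && (y == upd x i stR) then delta i else 0)).

Definition sir_gen (R : realType) (n : nat) (A : 'M[R]_n)
  (beta delta : 'I_n -> R) (x y : config n) : R :=
  sir_rate A beta delta x y
  - (x == y)%:R * \sum_(z : config n) sir_rate A beta delta x z.

(* p x t = Pr(state at time t = x), for the process started deterministically
   at x0: characterized by the Kolmogorov forward equations p' = p Q, p(0)=e_x0. *)
Definition sir_law (R : realType) (n : nat) (A : 'M[R]_n)
  (beta delta : 'I_n -> R) (x0 : config n) (p : config n -> R -> R) : Prop :=
  (forall x, p x 0 = (x == x0)%:R) /\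
  (forall x (t : R), is_derive t 1 (p x)
       (\sum_(y : config n) p y t * sir_gen A beta delta y x)).

Definition num_in (n : nat) (s : 'I_3) (x : config n) : nat :=
  #|[set i | x i == s]|.

Definition expected_removed (R : realType) (n : nat)
  (p : config n -> R -> R) (t : R) : R :=
  \sum_(x : config n) p x t * (num_in stR x)%:R.

Definition posynomial (R : realType) (f : R -> R) : Prop :=
  exists s : seq (R * R),
    all (fun ca => 0 < ca.1) s /\
    forall x : R, 0 < x -> f x = \sum_(ca <- s) ca.1 * powR x ca.2.

Definition adjacency (R : realType) (n : nat) (A : 'M[R]_n) : Prop :=
  (forall i j, A i j = 0 \/ A i j = 1) /\
  (forall i j, A i j = A j i) /\
  (forall i, A i i = 0).

(* Main.v *)
Require Import Defs.
From HB Require Import structures.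
From mathcomp Require Import all_boot all_order all_algebra.
From mathcomp Require Import all_classical all_reals all_analysis.
From mathcomp Require Import ring lra zify.
Import Order.TTheory GRing.Theory Num.Theory.
Import numFieldNormedType.Exports.
Local Open Scope classical_set_scope.
Local Open Scope ring_scope.

Lemma dvbl {R : realType} {f : R -> R} {x df : R} : is_derive x 1 f df -> derivable f x 1.
Proof. by case. Qed.
Lemma dval {R : realType} {f : R -> R} {x df : R} : is_derive x 1 f df -> 'D_1 f x = df.
Proof. by case. Qed.

Lemma ndecr_of_deriv (R : realType) (h h' : R -> R) :
  (forall t : R, is_derive t 1 h (h' t)) -> (forall t : R, 0 <= t -> 0 <= h' t) ->
  forall x y, 0 <= x -> x <= y -> h x <= h y.
Proof.
move=> Hd Hp x y x0 xy.
apply: (@ger0_derive1_ndecry R h 0) => //.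
- move=> t; rewrite in_itv/= andbT => t0.
  by rewrite derive1E (dval (Hd t)); apply: Hp; apply: ltW.
- apply: continuous_subspaceT => t; apply: differentiable_continuous.
  by apply/derivable1_diffP; exact: dvbl (Hd t).
Qed.

Lemma is_derive_big (R : realType) (T : Type) (l : seq T) (g : T -> R -> R) (dg : T -> R) (t : R) :
  (forall x, is_derive t 1 (g x) (dg x)) ->
  is_derive t 1 (fun s => \sum_(x <- l) g x s) (\sum_(x <- l) dg x).
Proof.
move=> H; elim: l => [|a l IH].
  have -> : (fun s => \sum_(x <- [::]) g x s) = cst 0 by apply/funext => s; rewrite big_nil.
  rewrite big_nil; exact: is_derive_cst.
have -> : (fun s => \sum_(x <- a :: l) g x s) = g a + (fun s => \sum_(x <- l) g x s).
  by apply/funext => s; rewrite big_cons.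
rewrite big_cons; exact: is_deriveD.
Qed.

Lemma is_derive_mulc (R : realType) (f : R -> R) (df c t : R) :
  is_derive t 1 f df -> is_derive t 1 (fun s => f s * c) (df * c).
Proof.
move=> H; have := is_deriveZ c H.
have -> : c \*: f = (fun s => f s * c) by apply/funext => s; rewrite /= mulrC.
by rewrite mulrC.
Qed.

Lemma is_derive_lin (R : realType) (c t : R) : is_derive t 1 (fun s : R => c * s) c.
Proof.
have := is_deriveZ c (is_derive_id t (1:R)).
have -> : c \*: (@id R) = (fun s => c * s) by apply/funext.
by have -> : c *: (1:R) = c by rewrite [LHS]mulr1.
Qed.

Lemma is_derive_expc (R : realType) (c t : R) :
  is_derive t 1 (fun s => expR (c * s)) (c * expR (c * t)).
Proof.
have Hl := @is_derive_lin R c t.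
have He := is_derive_expR (c * t).
have -> : (fun s => expR (c * s)) = expR \o (fun s => c * s) by [].
apply: DeriveDef.
  apply/derivable1_diffP; apply: differentiable_comp; apply/derivable1_diffP.
  exact: dvbl Hl. exact: dvbl He.
rewrite -derive1E derive1_comp; [|exact: dvbl Hl|exact: dvbl He].
by rewrite !derive1E (dval Hl) (dval He) mulrC.
Qed.

Arguments ndecr_of_deriv {R h h'}.
Arguments is_derive_expc {R}.

Lemma sum_if_eq (R : realType) (n : nat) (P : bool) (a : R) (c : config n)
  (G : config n -> R) :
  \sum_(x : config n) (if P && (x == c) then a else 0) * G x =
  (if P then a * G c else 0).
Proof.
case: P => /=; last by rewrite big1 // => x _; rewrite mul0r.
rewrite (bigD1 c) //= eqxx big1 ?addr0 // => x /negbTE ->; by rewrite mul0r.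
Qed.

Lemma rate_sum (R : realType) (n : nat) (A : 'M[R]_n) (beta delta : 'I_n -> R)
  (y : config n) (G : config n -> R) :
  \sum_(x : config n) sir_rate A beta delta y x * G x =
  \sum_(i < n) ((if y i == stS then
        (beta i * \sum_(j < n) A i j * (y j == stI)%:R) * G (upd y i stI) else 0)
    + (if y i == stI then delta i * G (upd y i stR) else 0)).
Proof.
under eq_bigr do rewrite /sir_rate mulr_suml.
rewrite exchange_big; apply: eq_bigr => i _.
under eq_bigr do rewrite mulrDl.
by rewrite big_split /= !sum_if_eq.
Qed.

Lemma gen_sum (R : realType) (n : nat) (A : 'M[R]_n) (beta delta : 'I_n -> R)
  (y : config n) (F : config n -> R) :
  \sum_(x : config n) sir_gen A beta delta y x * F x =
  \sum_(x : config n) sir_rate A beta delta y x * (F x - F y).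
Proof.
rewrite /sir_gen.
under eq_bigr do rewrite mulrBl.
rewrite sumrB.
under [X in _ - X = _]eq_bigr do rewrite -mulrA.
set out := (\sum_(z : config n) sir_rate A beta delta y z).
have -> : \sum_(x : config n) (y == x)%:R * (out * F x) = out * F y.
  rewrite (bigD1 y) //= eqxx mul1r big1 ?addr0 // => x hx.
  by rewrite eq_sym (negbTE hx) mul0r.
under [RHS]eq_bigr do rewrite mulrBr.
by rewrite sumrB -mulr_suml mulrC.
Qed.

Definition FG (R : realType) (n : nat) (G : 'I_n -> 'I_3 -> R) (x : config n) : R :=
  \sum_(j < n) G j (x j).
Arguments FG {R n}.

Lemma upd_diff (R : realType) (n : nat) (G : 'I_n -> 'I_3 -> R) (y : config n) (i : 'I_n) (s : 'I_3) :
  FG G (upd y i s) - FG G y = G i s - G i (y i).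
Proof.
rewrite /FG (bigD1 i) //= [X in _ - X](bigD1 i) //= ffunE eqxx.
under eq_bigr => j hj do rewrite ffunE (negbTE hj).
by rewrite opprD addrACA subrr addr0.
Qed.

Lemma drift_G (R : realType) (n : nat) (A : 'M[R]_n) (beta delta : 'I_n -> R)
  (y : config n) (G : 'I_n -> 'I_3 -> R) :
  \sum_(x : config n) sir_gen A beta delta y x * FG G x =
  \sum_(i < n) ((if y i == stS then
        (beta i * \sum_(j < n) A i j * (y j == stI)%:R) * (G i stI - G i stS) else 0)
    + (if y i == stI then delta i * (G i stR - G i stI) else 0)).
Proof.
rewrite gen_sum rate_sum; apply: eq_bigr => i _.
rewrite !upd_diff.
by case: eqP => [->|_]; case: eqP => [->|_].
Qed.

Lemma deriv_E (R : realType) (n : nat) (A : 'M[R]_n) (beta delta : 'I_n -> R)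
  (x0 : config n) (p : config n -> R -> R) (F : config n -> R) (t : R) :
  sir_law A beta delta x0 p ->
  is_derive t 1 (fun s => \sum_(x : config n) p x s * F x)
    (\sum_(y : config n) p y t * \sum_(x : config n) sir_gen A beta delta y x * F x).
Proof.
case=> _ Hd.
have := @is_derive_big R _ (index_enum (config n)) (fun x s => p x s * F x)
  (fun x => (\sum_(y : config n) p y t * sir_gen A beta delta y x) * F x) t
  (fun x => @is_derive_mulc R _ _ (F x) t (Hd x t)).
suff -> : \sum_(x <- index_enum (config n))
   (\sum_(y : config n) p y t * sir_gen A beta delta y x) * F x =
  \sum_(y : config n) p y t * \sum_(x : config n) sir_gen A beta delta y x * F x by [].
under eq_bigr do rewrite mulr_suml.
rewrite exchange_big; apply: eq_bigr => y _.
rewrite mulr_sumr; apply: eq_bigr => x _; by rewrite mulrA.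
Qed.

Definition pot (n : nat) (x : config n) : nat := \sum_(i < n) val (x i).
Arguments pot {n}.

Lemma pot_upd (n : nat) (y : config n) (i : 'I_n) (s : 'I_3) :
  (pot (upd y i s) + val (y i) = pot y + val s)%N.
Proof.
rewrite /pot (bigD1 i) //= [X in _ = (X + _)%N](bigD1 i) //= ffunE eqxx.
under eq_bigr => j hj do rewrite ffunE (negbTE hj).
lia.
Qed.

Arguments pot_upd {n}.

Lemma rate_ge0 (R : realType) (n : nat) (A : 'M[R]_n) (beta delta : 'I_n -> R)
  (x y : config n) :
  (forall i j, 0 <= A i j) -> (forall i, 0 <= beta i) -> (forall i, 0 <= delta i) ->
  0 <= sir_rate A beta delta x y.
Proof.
move=> hA hb hd; rewrite /sir_rate; apply: sumr_ge0 => i _.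
apply: addr_ge0; case: ifP => _ //.
apply: mulr_ge0 => //; apply: sumr_ge0 => j _; apply: mulr_ge0 => //.
Qed.

Arguments rate_ge0 {R n A beta delta}.

Lemma rate_pot (R : realType) (n : nat) (A : 'M[R]_n) (beta delta : 'I_n -> R)
  (x y : config n) :
  sir_rate A beta delta y x != 0 -> (pot y < pot x)%N.
Proof.
case: (pselect (exists i, ((y i == stS) && (x == upd y i stI)) ||
                          ((y i == stI) && (x == upd y i stR)))).
  case=> i /orP [/andP[/eqP yi /eqP ->]|/andP[/eqP yi /eqP ->]] _.
    have := pot_upd y i stI; rewrite yi /=; lia.
  have := pot_upd y i stR; rewrite yi /=; lia.
move=> N; rewrite /sir_rate big1 ?eqxx // => i _.
case: ifP => [h|_]; first by exfalso; apply: N; exists i; rewrite h.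
case: ifP => [h|_]; first by exfalso; apply: N; exists i; rewrite h orbT.
by rewrite addr0.
Qed.

Arguments rate_pot {R n A beta delta x y}.

Lemma p_nonneg (R : realType) (n : nat) (A : 'M[R]_n) (beta delta : 'I_n -> R)
  (x0 : config n) (p : config n -> R -> R) :
  (forall i j, 0 <= A i j) -> (forall i, 0 <= beta i) -> (forall i, 0 <= delta i) ->
  sir_law A beta delta x0 p ->
  forall x (t : R), 0 <= t -> 0 <= p x t.
Proof.
move=> hA hb hdl [H0 Hd0].
suff H : forall k x, (pot x < k)%N -> forall t : R, 0 <= t -> 0 <= p x t.
  by move=> x t; apply: (H (pot x).+1).
elim=> [//|k IH] x hx t t0.
set c := \sum_(z : config n) sir_rate A beta delta x z.
set s := fun u => \sum_(y : config n) p y u * sir_rate A beta delta y x.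
have c0 : 0 <= c by apply: sumr_ge0 => z _; exact: rate_ge0.
have Hd : forall u : R, is_derive u 1 (p x) (s u - p x u * c).
  move=> u; have := Hd0 x u.
  suff -> : \sum_(y : config n) p y u * sir_gen A beta delta y x = s u - p x u * c by [].
  rewrite /sir_gen; under eq_bigr do rewrite mulrBr; rewrite sumrB.
  congr (_ - _); rewrite (bigD1 x) //= eqxx mul1r [X in _ + X]big1 ?addr0 // => y hy.
  by rewrite (negbTE hy) mul0r mulr0.
have s0 : forall u : R, 0 <= u -> 0 <= s u.
  move=> u u0; apply: sumr_ge0 => y _.
  have [->|nz] := eqVneq (sir_rate A beta delta y x) 0; first by rewrite mulr0.
  apply: mulr_ge0; last exact: rate_ge0.
  apply: IH => //; have := rate_pot nz; lia.
set h := fun u => expR (c * u) * p x u.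
have hd : forall u : R, is_derive u 1 h (expR (c * u) * s u).
  move=> u; have := is_deriveM (is_derive_expc c u) (Hd u).
  have -> : forall a b : R, a *: b = a * b by [].
  have -> : expR (c * u) * (s u - p x u * c) + p x u * (c * expR (c * u)) =
            expR (c * u) * s u by ring.
  by [].
have H : h 0 <= h t.
  apply: (ndecr_of_deriv hd) => // u u0.
  by apply: mulr_ge0; [exact: expR_ge0 | exact: s0].
move: H; rewrite /h mulr0 expR0 mul1r H0 => H.
have {}H : 0 <= expR (c * t) * p x t := le_trans (ler0n _ _) H.
by rewrite pmulr_rge0 ?expR_gt0 in H.
Qed.

Lemma num_in_sum (R : realType) (n : nat) (s : 'I_3) (x : config n) :
  ((num_in s x)%:R : R) = \sum_(j < n) ((x j == s)%:R : R).
Proof.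
rewrite /num_in -sum1dep_card natr_sum big_mkcond /=.
by apply: eq_bigr => j _; case: (x j == s).
Qed.

Theorem theorem1 (R : realType) (n : nat) (A : 'M[R]_n)
  (x0 : config n)
  (Cbar lambdabar : R)
  (bl bu dl du : 'I_n -> R)
  (f g : 'I_n -> R -> R)
  (beta delta : 'I_n -> R) (v : 'rV[R]_n) :
  adjacency A ->
  (forall i, x0 i != stR) ->
  0 < Cbar -> 0 < lambdabar ->
  (forall i, 0 < bl i /\ bl i <= bu i) ->
  (forall i, 0 < dl i /\ dl i <= du i) ->
  (forall i, posynomial (f i) /\ posynomial (g i)) ->
  (forall i, 0 < v 0 i) ->
  let J := diag_mx (\row_i (x0 i == stS)%:R) in
  let B := diag_mx (\row_i beta i) in
  let D := diag_mx (\row_i delta i) in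
  let I0 := \col_i ((x0 i == stI)%:R : R) in
  let sigmaI0 : R := (num_in stI x0)%:R in
  \sum_(i < n) (f i (delta i) + g i (beta i)) <= Cbar ->
  (forall j, (v *m J *m B *m A + const_mx 1 *m D) 0 j < (v *m D) 0 j) ->
  (v *m I0) 0 0 < lambdabar + sigmaI0 ->
  (forall i, bl i <= beta i <= bu i) ->
  (forall i, dl i <= delta i <= du i) ->
  [/\ (forall i, bl i <= beta i <= bu i),
      (forall i, dl i <= delta i <= du i),
      \sum_(i < n) (f i (delta i) + g i (beta i)) <= Cbar &
      forall p : config n -> R -> R, sir_law A beta delta x0 p ->
        exists L : R,
          (expected_removed p t @[t --> +oo] --> L) /\
          L - sigmaI0 <= lambdabar].
Proof.
move=> hadj hx0 _ _ hbl hdl _ hv J B D I0 sigmaI0 hC hM hI hb hd.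
split=> // p law.
have hA : forall i j, 0 <= A i j by move=> i j; case: (hadj.1 i j) => ->.
have hB : forall i, 0 <= beta i.
  move=> i; have := hb i; have := hbl i; case=> b0 _ /andP[h _].
  exact: le_trans (ltW b0) h.
have hD : forall i, 0 <= delta i.
  move=> i; have := hd i; have := hdl i; case=> b0 _ /andP[h _].
  exact: le_trans (ltW b0) h.
have pnn := @p_nonneg R n A beta delta x0 p hA hB hD law.
set Jd := fun j : 'I_n => ((x0 j == stS)%:R : R).
have hM' : forall j, \sum_(i < n) v 0 i * Jd i * beta i * A i j + delta j < v 0 j * delta j.
  move=> j; have := hM j.
  rewrite /J /B /D !mul_mx_diag !mxE mul1r.
  by under eq_bigr do rewrite !mxE.
set GR := fun (j : 'I_n) (s : 'I_3) => ((s == stR)%:R : R).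
set GP := fun (j : 'I_n) (s : 'I_3) => ((s == stR)%:R : R) +
   (v 0 j * (s == stI)%:R + (1 - Jd j) * v 0 j * (s == stS)%:R).
set E := fun G t => \sum_(x : config n) p x t * FG G x.
have ER : forall t, expected_removed p t = E GR t.
  move=> t; rewrite /expected_removed /E; apply: eq_bigr => x _.
  by rewrite num_in_sum.
set Phi0 := (v *m I0) 0 0.
have EP0 : E GP 0 = Phi0.
  case: law => H0 _.
  rewrite /E; under eq_bigr do rewrite H0.
  rewrite (bigD1 x0) //= eqxx mul1r big1 ?addr0; last first.
    by move=> x hx; rewrite (negbTE hx) mul0r.
  rewrite /Phi0 /I0 mxE /FG; apply: eq_bigr => j _; rewrite mxE /GP /Jd (negbTE (hx0 j)) add0r.
  by case: (x0 j == stS) => /=; rewrite ?subrr ?mul0r ?mulr0 ?addr0.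
have eIR : (stI == stR) = false by [].
have eSR : (stS == stR) = false by [].
have eSI : (stS == stI) = false by [].
have eRI : (stR == stI) = false by [].
have eIS : (stI == stS) = false by [].
have eRS : (stR == stS) = false by [].
have mono : forall t u, 0 <= t -> t <= u -> E GR t <= E GR u.
  move=> t u t0 tu.
  apply: (@ndecr_of_deriv R (E GR) (fun s => \sum_(y : config n) p y s *
     \sum_(x : config n) sir_gen A beta delta y x * FG GR x)) => // [s|s s0].
    exact: (@deriv_E R n A beta delta x0 p (FG GR) s law).
  apply: sumr_ge0 => y _; apply: mulr_ge0; first exact: pnn.
  rewrite drift_G; apply: sumr_ge0 => i _; rewrite /GR !eqxx eIR eSR.
  by apply: addr_ge0; case: ifP => _ //; rewrite ?subrr ?mulr0 ?subr0 ?mulr1.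
have Jd0 : forall j, 0 <= Jd j by move=> j; exact: ler0n.
have Jd1 : forall j, 0 <= 1 - Jd j by move=> j; rewrite /Jd; case: (x0 j == stS) => /=; rewrite ?subrr ?subr0 ?ler01.
have drP : forall y : config n,
    \sum_(x : config n) sir_gen A beta delta y x * FG GP x <= 0.
  move=> y; rewrite drift_G.
  have e1 : forall i, GP i stI - GP i stS = Jd i * v 0 i.
    by move=> i; rewrite /GP !eqxx eIR eSR eSI eIS /=; ring.
  have e2 : forall i, GP i stR - GP i stI = 1 - v 0 i.
    by move=> i; rewrite /GP !eqxx eIR eRI eRS /=; ring.
  under eq_bigr => i _ do rewrite e1 e2.
  apply: (@le_trans _ _ (\sum_(i < n) ((beta i * \sum_(j < n) A i j * (y j == stI)%:R) * (Jd i * v 0 i)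
      + (y i == stI)%:R * (delta i * (1 - v 0 i))))).
    apply: ler_sum => i _; apply: lerD.
      case: ifP => _ //; apply: mulr_ge0; [apply: mulr_ge0 => //; apply: sumr_ge0 => j _; apply: mulr_ge0 => //|].
      by apply: mulr_ge0 => //; apply: ltW.
    by case: ifP => _; rewrite ?mul1r ?mul0r.
  rewrite big_split /=.
  have -> : \sum_(i < n) (beta i * \sum_(j < n) A i j * (y j == stI)%:R) * (Jd i * v 0 i)
     = \sum_(j < n) (y j == stI)%:R * \sum_(i < n) v 0 i * Jd i * beta i * A i j.
    under eq_bigr => i _ do rewrite mulr_sumr mulr_suml.
    rewrite exchange_big; apply: eq_bigr => j _; rewrite mulr_sumr.
    by apply: eq_bigr => i _; ring.
  rewrite -big_split /=; apply: sumr_le0 => j _.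
  have -> : (y j == stI)%:R * (\sum_(i < n) v 0 i * Jd i * beta i * A i j) +
      (y j == stI)%:R * (delta j * (1 - v 0 j)) =
      (y j == stI)%:R * ((\sum_(i < n) v 0 i * Jd i * beta i * A i j) + delta j - v 0 j * delta j).
    by ring.
  apply: mulr_ge0_le0 => //; have := hM' j; lra.
have bnd : forall t, 0 <= t -> E GR t <= Phi0.
  move=> t t0; rewrite -EP0.
  apply: (@le_trans _ _ (E GP t)).
    apply: ler_sum => x _; apply: ler_wpM2l; first exact: pnn.
    apply: ler_sum => j _; rewrite /GR /GP lerDl.
    apply: addr_ge0; apply: mulr_ge0 => //; try apply: mulr_ge0 => //; apply: ltW; exact: hv.
  rewrite -[X in _ <= X]opprK -[X in X <= _]opprK lerN2.
  apply: (@ndecr_of_deriv R (fun s => - E GP s) (fun s => - \sum_(y : config n) p y s *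
     \sum_(x : config n) sir_gen A beta delta y x * FG GP x)) => // [s|s s0].
    exact: (is_deriveN (@deriv_E R n A beta delta x0 p (FG GP) s law)).
  rewrite oppr_ge0; apply: sumr_le0 => y _; apply: mulr_ge0_le0 => //; exact: pnn.
set h := fun t : R => E GR (if 0 <= t then t else 0).
have hnd : nondecreasing_fun h.
  move=> t u tu; rewrite /h.
  case: ifP => t0; case: ifP => u0.
  - exact: mono.
  - by exfalso; move: u0; rewrite (le_trans t0 tu).
  - exact: mono.
  - exact: le_refl.
have hub : ubound (range h) Phi0.
  move=> _ [t _ <-]; rewrite /h; case: ifP => t0; apply: bnd => //.
have hcv := nondecreasing_cvgr hnd (ex_intro _ Phi0 hub).
exists (sup (range h)); split.
  apply: cvg_trans hcv; apply: near_eq_cvg; near=> t.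
  by rewrite /h ER ifT.
have : sup (range h) <= Phi0 by apply: ge_sup => //; exists (h 0), 0.
move: hI; rewrite -/Phi0 -/sigmaI0 => hI hs.
lra.
Unshelve. all: end_near.
Qed.
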